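(* Let $\mathbb{A}$ be a 2-category having the two-dimensional kernel diagram of a 1-cell $l:b\to e$. Then: (1) provided that the right lifting $\mathrm{Rift}_ll$ of $l$ through $l$ exists and is respected by $\delta_0:b\downarrow^l b\to b$, $l$ is a Kleisli morphism if and only if $l$ is an effective op-faithful morphism; (2) provided that the left lifting $\mathrm{Lift}_ll$ of $l$ through $l$ exists and is respected by $\delta_1:b\downarrow^lb\to b$, $l$ is a co-Kleisli morphism if and only if $l$ is an effective op-faithful morphism.
   Context: A 2-category is a $\mathbf{Cat}$-enriched category; composition of 1-cells is juxtaposition, vertical composition of 2-cells is $\cdot$, horizontal composition is $\ast$, $\mathrm{id}_f$ is the identity 2-cell on $f$. $\mathbb{A}^{\mathrm{op}}$, $\mathbb{A}^{\mathrm{co}}$, $\mathbb{A}^{\mathrm{coop}}$ are obtained by reversing 1-cells, 2-cells, or both. A 1-cell is an equivalence if it has a pseudo-inverse up to invertible 2-cells. For a 1-cell $p:e\to b$ of a 2-category $\mathbb{B}$: an opcomma object of $p$ along itself is $b\uparrow_pb$ with $\delta^0,\delta^1:b\to b\uparrow_pb$, $\alpha:\delta^1p\Rightarrow\delta^0p$ such that for every $y$, $h\mapsto(h\delta^0,h\delta^1,\mathrm{id}_h\ast\alpha)$ is an isomorphism from $\mathbb{B}(b\uparrow_pb,y)$ onto the category of triples $(h_0,h_1:b\to y,\beta:h_1p\Rightarrow h_0p)$ with morphisms pairs $(\xi_0,\xi_1)$ with $(\xi_0\ast\mathrm{id}_p)\cdot\beta=\beta'\cdot(\xi_1\ast\mathrm{id}_p)$.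 A two-dimensional pushout of a span $f_0,f_1$ is $P$ with $q_0,q_1$, $q_0f_0=q_1f_1$, such that $k\mapsto(kq_0,kq_1)$ is an isomorphism from $\mathbb{B}(P,y)$ onto pairs $(k_0,k_1)$ with $k_0f_0=k_1f_1$ (morphisms pairs of 2-cells $(\xi_0,\xi_1)$ with $\xi_0\ast\mathrm{id}_{f_0}=\xi_1\ast\mathrm{id}_{f_1}$). $\mathbb{B}$ has the two-dimensional cokernel diagram of $p$ if it has $b\uparrow_pb$ and a two-dimensional pushout $b\uparrow_pb\uparrow_pb$ of $(\delta^0,\delta^1)$ with $D^0,D^2$, $D^2\delta^0=D^0\delta^1$; $D^1$ is the unique 1-cell with $D^1\delta^1=D^2\delta^1$, $D^1\delta^0=D^0\delta^0$, $\mathrm{id}_{D^1}\ast\alpha=(\mathrm{id}_{D^0}\ast\alpha)\cdot(\mathrm{id}_{D^2}\ast\alpha)$; $s^0$ is unique with $s^0\delta^0=s^0\delta^1=\mathrm{id}_b$, $\mathrm{id}_{s^0}\ast\alpha=\mathrm{id}_p$. $\mathrm{Desc}_p(y)$: pairs $(h:y\to b,\beta:\delta^1h\Rightarrow\delta^0h)$ with $(\mathrm{id}_{D^0}\ast\beta)\cdot(\mathrm{id}_{D^2}\ast\beta)=\mathrm{id}_{D^1}\ast\beta$, $\mathrm{id}_{s^0}\ast\beta=\mathrm{id}_h$, morphisms $\xi:h_1\Rightarrow h_0$ with $\beta_0\cdot(\mathrm{id}_{\delta^1}\ast\xi)=(\mathrm{id}_{\delta^0}\ast\xi)\cdot\beta_1$;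 a lax descent object is $L$, $d:L\to b$, $\Psi:\delta^1d\Rightarrow\delta^0d$ with $g\mapsto(dg,\Psi\ast\mathrm{id}_g)$ an isomorphism $\mathbb{B}(y,L)\cong\mathrm{Desc}_p(y)$ for all $y$; $p^H$ is unique with $dp^H=p$, $\Psi\ast\mathrm{id}_{p^H}=\alpha$. $p$ is effective faithful in $\mathbb{B}$ if $\mathbb{B}$ has the two-dimensional cokernel diagram of $p$, a lax descent object of it, and $p^H$ is an equivalence. A right Kan extension of $f$ along $g$ is $(r,\gamma:rg\Rightarrow f)$ with $\beta\mapsto\gamma\cdot(\beta\ast\mathrm{id}_g)$ bijective from 2-cells $k\Rightarrow r$ to 2-cells $kg\Rightarrow f$; $\delta$ preserves it if $(\delta r,\mathrm{id}_\delta\ast\gamma)$ is a right Kan extension of $\delta f$ along $g$. The codensity monad of $p$ is $(b,t,m,\eta)$ from a right Kan extension $(t,\gamma)$ of $p$ along $p$, $m$ unique with $\gamma\cdot(m\ast\mathrm{id}_p)=\gamma\cdot(\mathrm{id}_t\ast\gamma)$, $\eta$ unique with $\gamma\cdot(\eta\ast\mathrm{id}_p)=\mathrm{id}_p$. An Eilenberg–Moore object is $b^{\mathsf{T}}$ with $u$, $\mu:tu\Rightarrow u$ such that $g\mapsto(ug,\mu\ast\mathrm{id}_g)$ is an isomorphism onto the category of pairs $(h,\beta:th\Rightarrow h)$ with $\beta\cdot(\mathrm{id}_t\ast\beta)=\beta\cdot(m\ast\mathrm{id}_h)$, $\beta\cdot(\eta\ast\mathrm{id}_h)=\mathrm{id}_h$.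 $p$ is monadic in $\mathbb{B}$ if it has a codensity monad with an Eilenberg–Moore object and the unique $p^{\mathsf{T}}$ with $up^{\mathsf{T}}=p$, $\mu\ast\mathrm{id}_{p^{\mathsf{T}}}=\gamma$ is an equivalence. Duals in $\mathbb{A}$: the two-dimensional kernel diagram of $l$ is its two-dimensional cokernel diagram in $\mathbb{A}^{\mathrm{op}}$; its opcomma object in $\mathbb{A}^{\mathrm{op}}$ is a comma object $b\downarrow^lb$ in $\mathbb{A}$, and $\delta_0,\delta_1:b\downarrow^lb\to b$ are the 1-cells of $\mathbb{A}$ corresponding to $\delta^0,\delta^1$ in $\mathbb{A}^{\mathrm{op}}$. The right lifting of $l$ through $l$ is the right Kan extension of $l$ along $l$ in $\mathbb{A}^{\mathrm{op}}$, respected by a 1-cell if preserved by it in $\mathbb{A}^{\mathrm{op}}$; the left lifting and its respect are the same notions in $\mathbb{A}^{\mathrm{coop}}$. $l$ is effective op-faithful if it is effective faithful in $\mathbb{A}^{\mathrm{op}}$; $l$ is a Kleisli morphism if it is monadic in $\mathbb{A}^{\mathrm{op}}$, and a co-Kleisli morphism if it is monadic in $\mathbb{A}^{\mathrm{coop}}$. *)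

(* Defs.v *)
Set Implicit Arguments.
Unset Strict Implicit.

(* 1-cells hom a b; 2-cells of the hom-category (a,b) form the type cell a b,
   each 2-cell α having a source src α and target tgt α (α : src α ⇒ tgt α).
   comp g f = gf (juxtaposition: first f then g); vcomp β α = β · α;
   hcomp β α = β ∗ α; id2 f = id_f. *)
Record TwoCatData := {
  ob : Type;
  hom : ob -> ob -> Type;
  cell : ob -> ob -> Type;
  src : forall a b, cell a b -> hom a b;
  tgt : forall a b, cell a b -> hom a b;
  id1 : forall a, hom a a;
  comp : forall a b c, hom b c -> hom a b -> hom a c;
  id2 : forall a b, hom a b -> cell a b;
  vcomp : forall a b, cell a b -> cell a b -> cell a b;
  hcomp : forall a b c, cell b c -> cell a b -> cell a c
}.
Arguments id1 {_} a.
Arguments hom : clear implicits.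
Arguments cell : clear implicits.

Record TwoCatLaws (C : TwoCatData) : Prop := {
  compA : forall a b c d (h : hom C c d) (g : hom C b c) (f : hom C a b),
      comp h (comp g f) = comp (comp h g) f;
  comp1l : forall a b (f : hom C a b), comp (id1 b) f = f;
  comp1r : forall a b (f : hom C a b), comp f (id1 a) = f;
  src_id2 : forall a b (f : hom C a b), src (id2 f) = f;
  tgt_id2 : forall a b (f : hom C a b), tgt (id2 f) = f;
  src_vcomp : forall a b (β α : cell C a b), tgt α = src β -> src (vcomp β α) = src α;
  tgt_vcomp : forall a b (β α : cell C a b), tgt α = src β -> tgt (vcomp β α) = tgt β;
  src_hcomp : forall a b c (β : cell C b c) (α : cell C a b),
      src (hcomp β α) = comp (src β) (src α);
  tgt_hcomp : forall a b c (β : cell C b c) (α : cell C a b),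
      tgt (hcomp β α) = comp (tgt β) (tgt α);
  vcompA : forall a b (γ β α : cell C a b), tgt α = src β -> tgt β = src γ ->
      vcomp γ (vcomp β α) = vcomp (vcomp γ β) α;
  vcomp_id2l : forall a b (α : cell C a b), vcomp (id2 (tgt α)) α = α;
  vcomp_id2r : forall a b (α : cell C a b), vcomp α (id2 (src α)) = α;
  hcompA : forall a b c d (γ : cell C c d) (β : cell C b c) (α : cell C a b),
      hcomp γ (hcomp β α) = hcomp (hcomp γ β) α;
  hcomp_id2l : forall a b (α : cell C a b), hcomp (id2 (id1 b)) α = α;
  hcomp_id2r : forall a b (α : cell C a b), hcomp α (id2 (id1 a)) = α;
  hcomp_id2 : forall a b c (g : hom C b c) (f : hom C a b),
      hcomp (id2 g) (id2 f) = id2 (comp g f);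
  interchange : forall a b c (β β' : cell C b c) (α α' : cell C a b),
      tgt α = src α' -> tgt β = src β' ->
      hcomp (vcomp β' β) (vcomp α' α) = vcomp (hcomp β' α') (hcomp β α)
}.

Record TwoCat := { tc_data :> TwoCatData; tc_laws : TwoCatLaws tc_data }.

Definition op2 (C : TwoCatData) : TwoCatData := {|
  ob := ob C;
  hom := fun a b => hom C b a;
  cell := fun a b => cell C b a;
  src := fun a b α => src α;
  tgt := fun a b α => tgt α;
  id1 := fun a => id1 a;
  comp := fun a b c g f => comp f g;
  id2 := fun a b f => id2 f;
  vcomp := fun a b β α => vcomp β α;
  hcomp := fun a b c β α => hcomp α β |}.

Definition co2 (C : TwoCatData) : TwoCatData := {|
  ob := ob C;
  hom := fun a b => hom C a b;
  cell := fun a b => cell C a b;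
  src := fun a b α => tgt α;
  tgt := fun a b α => src α;
  id1 := fun a => id1 a;
  comp := fun a b c g f => comp g f;
  id2 := fun a b f => id2 f;
  vcomp := fun a b β α => vcomp α β;
  hcomp := fun a b c β α => hcomp β α |}.

Definition coop2 (C : TwoCatData) : TwoCatData := co2 (op2 C).

Lemma op2_laws (C : TwoCatData) : TwoCatLaws C -> TwoCatLaws (op2 C).
Proof.
  intros [] ; constructor; simpl; intros; eauto; symmetry; eauto.
Qed.

Lemma co2_laws (C : TwoCatData) : TwoCatLaws C -> TwoCatLaws (co2 C).
Proof.
  intros [] ; constructor; simpl; intros; eauto; symmetry; eauto.
Qed.

Definition op2c (A : TwoCat) : TwoCat := {| tc_data := op2 A; tc_laws := op2_laws (tc_laws A) |}.
Definition co2c (A : TwoCat) : TwoCat := {| tc_data := co2 A; tc_laws := co2_laws (tc_laws A) |}.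
Definition coop2c (A : TwoCat) : TwoCat := co2c (op2c A).

Section Notions.
Variable B : TwoCatData.

Definition is_cell a b (α : cell B a b) (f g : hom B a b) := src α = f /\ tgt α = g.
Definition wl a b c (h : hom B b c) (α : cell B a b) : cell B a c := hcomp (id2 h) α.
Definition wr a b c (α : cell B b c) (h : hom B a b) : cell B a c := hcomp α (id2 h).

Definition invertible a b (η : cell B a b) :=
  exists η' : cell B a b, is_cell η' (tgt η) (src η) /\
    vcomp η' η = id2 (src η) /\ vcomp η η' = id2 (tgt η).

Definition equivalence a b (f : hom B a b) :=
  exists (g : hom B b a) (η : cell B a a) (ε : cell B b b),
    is_cell η (comp g f) (id1 a) /\ invertible η /\
    is_cell ε (comp f g) (id1 b) /\ invertible ε.

Record opcomma e b (p : hom B e b) := {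
  oc : ob B;
  oc_d0 : hom B b oc;
  oc_d1 : hom B b oc;
  oc_alpha : cell B e oc;
  oc_alpha_cell : is_cell oc_alpha (comp oc_d1 p) (comp oc_d0 p);
  oc_obj : forall y (h0 h1 : hom B b y) (β : cell B e y),
      is_cell β (comp h1 p) (comp h0 p) ->
      exists! h : hom B oc y,
        comp h oc_d0 = h0 /\ comp h oc_d1 = h1 /\ wl h oc_alpha = β;
  oc_mor : forall y (h h' : hom B oc y) (ξ0 ξ1 : cell B b y),
      is_cell ξ0 (comp h oc_d0) (comp h' oc_d0) ->
      is_cell ξ1 (comp h oc_d1) (comp h' oc_d1) ->
      vcomp (wr ξ0 p) (wl h oc_alpha) = vcomp (wl h' oc_alpha) (wr ξ1 p) ->
      exists! ξ : cell B oc y, is_cell ξ h h' /\ wr ξ oc_d0 = ξ0 /\ wr ξ oc_d1 = ξ1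
}.

Record pushout2 a c0 c1 (f0 : hom B a c0) (f1 : hom B a c1) := {
  po : ob B;
  po_q0 : hom B c0 po;
  po_q1 : hom B c1 po;
  po_sq : comp po_q0 f0 = comp po_q1 f1;
  po_obj : forall y (k0 : hom B c0 y) (k1 : hom B c1 y),
      comp k0 f0 = comp k1 f1 ->
      exists! k : hom B po y, comp k po_q0 = k0 /\ comp k po_q1 = k1;
  po_mor : forall y (k k' : hom B po y) (ξ0 : cell B c0 y) (ξ1 : cell B c1 y),
      is_cell ξ0 (comp k po_q0) (comp k' po_q0) ->
      is_cell ξ1 (comp k po_q1) (comp k' po_q1) ->
      wr ξ0 f0 = wr ξ1 f1 ->
      exists! ξ : cell B po y, is_cell ξ k k' /\ wr ξ po_q0 = ξ0 /\ wr ξ po_q1 = ξ1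
}.

(* two-dimensional cokernel diagram of p.  The pushout is of (δ^0, δ^1),
   with D^2 := po_q0 (paired with δ^0) and D^0 := po_q1 (paired with δ^1),
   so that D^2 δ^0 = D^0 δ^1.  D^1 and s^0 are the (unique) 1-cells with the
   stated properties. *)
Record cokernel2 e b (p : hom B e b) := {
  ck_oc : opcomma p;
  ck_po : pushout2 (oc_d0 ck_oc) (oc_d1 ck_oc);
  ck_D1 : hom B (oc ck_oc) (po ck_po);
  ck_D1_d1 : comp ck_D1 (oc_d1 ck_oc) = comp (po_q0 ck_po) (oc_d1 ck_oc);
  ck_D1_d0 : comp ck_D1 (oc_d0 ck_oc) = comp (po_q1 ck_po) (oc_d0 ck_oc);
  ck_D1_alpha : wl ck_D1 (oc_alpha ck_oc)
      = vcomp (wl (po_q1 ck_po) (oc_alpha ck_oc)) (wl (po_q0 ck_po) (oc_alpha ck_oc));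
  ck_s0 : hom B (oc ck_oc) b;
  ck_s0_d0 : comp ck_s0 (oc_d0 ck_oc) = id1 b;
  ck_s0_d1 : comp ck_s0 (oc_d1 ck_oc) = id1 b;
  ck_s0_alpha : wl ck_s0 (oc_alpha ck_oc) = id2 p
}.

Definition ck_D0 e b (p : hom B e b) (K : cokernel2 p) := po_q1 (ck_po K).
Definition ck_D2 e b (p : hom B e b) (K : cokernel2 p) := po_q0 (ck_po K).
Definition ck_d0 e b (p : hom B e b) (K : cokernel2 p) := oc_d0 (ck_oc K).
Definition ck_d1 e b (p : hom B e b) (K : cokernel2 p) := oc_d1 (ck_oc K).

Definition desc_datum e b (p : hom B e b) (K : cokernel2 p) y
    (h : hom B y b) (β : cell B y (oc (ck_oc K))) :=
  is_cell β (comp (ck_d1 K) h) (comp (ck_d0 K) h) /\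
  vcomp (wl (ck_D0 K) β) (wl (ck_D2 K) β) = wl (ck_D1 K) β /\
  wl (ck_s0 K) β = id2 h.
Arguments desc_datum {e b p} K {y} h β.

Record laxdesc e b (p : hom B e b) (K : cokernel2 p) := {
  ld_L : ob B;
  ld_d : hom B ld_L b;
  ld_Psi : cell B ld_L (oc (ck_oc K));
  ld_datum : desc_datum K ld_d ld_Psi;
  ld_obj : forall y (h : hom B y b) (β : cell B y (oc (ck_oc K))),
      desc_datum K h β ->
      exists! g : hom B y ld_L, comp ld_d g = h /\ wr ld_Psi g = β;
  ld_mor : forall y (g g' : hom B y ld_L) (ξ : cell B y b),
      is_cell ξ (comp ld_d g) (comp ld_d g') ->
      vcomp (wr ld_Psi g') (wl (ck_d1 K) ξ) = vcomp (wl (ck_d0 K) ξ) (wr ld_Psi g) ->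
      exists! ζ : cell B y ld_L, is_cell ζ g g' /\ wl ld_d ζ = ξ
}.

Definition effective_faithful e b (p : hom B e b) :=
  exists (K : cokernel2 p) (D : laxdesc K) (pH : hom B e (ld_L D)),
    comp (ld_d D) pH = p /\ wr (ld_Psi D) pH = oc_alpha (ck_oc K) /\ equivalence pH.

Definition is_ran a b c (f : hom B a c) (g : hom B a b) (r : hom B b c) (γ : cell B a c) :=
  is_cell γ (comp r g) f /\
  forall (k : hom B b c) (θ : cell B a c), is_cell θ (comp k g) f ->
    exists! β : cell B b c, is_cell β k r /\ vcomp γ (wr β g) = θ.

Definition preserves_ran a b c c' (δ : hom B c c') (f : hom B a c) (g : hom B a b)
    (r : hom B b c) (γ : cell B a c) :=
  is_ran (comp δ f) g (comp δ r) (wl δ γ).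

Definition is_codensity e b (p : hom B e b) (t : hom B b b) (γ : cell B e b)
    (m η : cell B b b) :=
  is_ran p p t γ /\
  is_cell m (comp t t) t /\ vcomp γ (wr m p) = vcomp γ (wl t γ) /\
  is_cell η (id1 b) t /\ vcomp γ (wr η p) = id2 p.

Definition is_alg b (t : hom B b b) (m η : cell B b b) y (h : hom B y b) (β : cell B y b) :=
  is_cell β (comp t h) h /\
  vcomp β (wl t β) = vcomp β (wr m h) /\
  vcomp β (wr η h) = id2 h.

Record EMobj b (t : hom B b b) (m η : cell B b b) := {
  em_ob : ob B;
  em_u : hom B em_ob b;
  em_mu : cell B em_ob b;
  em_alg : is_alg t m η em_u em_mu;
  em_obj : forall y (h : hom B y b) (β : cell B y b), is_alg t m η h β ->
      exists! g : hom B y em_ob, comp em_u g = h /\ wr em_mu g = β;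
  em_mor : forall y (g g' : hom B y em_ob) (ξ : cell B y b),
      is_cell ξ (comp em_u g) (comp em_u g') ->
      vcomp (wr em_mu g') (wl t ξ) = vcomp ξ (wr em_mu g) ->
      exists! ζ : cell B y em_ob, is_cell ζ g g' /\ wl em_u ζ = ξ
}.

Definition monadic e b (p : hom B e b) :=
  exists (t : hom B b b) (γ : cell B e b) (m η : cell B b b),
    is_codensity p t γ m η /\
    exists (E : EMobj t m η) (pT : hom B e (em_ob E)),
      comp (em_u E) pT = p /\ wr (em_mu E) pT = γ /\ equivalence pT.

End Notions.

Definition kernel2 (A : TwoCat) (b e : ob A) (l : hom A b e) :=
  @cokernel2 (op2 A) e b l.

Definition ker_delta0 (A : TwoCat) b e (l : hom A b e) (K : kernel2 l)
  : hom A (oc (ck_oc K)) b := oc_d0 (ck_oc K).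
Definition ker_delta1 (A : TwoCat) b e (l : hom A b e) (K : kernel2 l)
  : hom A (oc (ck_oc K)) b := oc_d1 (ck_oc K).

Definition is_rift (A : TwoCat) b e (l : hom A b e) (r : hom A b b) (γ : cell A b e) :=
  @is_ran (op2 A) e b b l l r γ.
Definition respects_rift (A : TwoCat) b e c (δ : hom A c b) (l : hom A b e)
    (r : hom A b b) (γ : cell A b e) :=
  @preserves_ran (op2 A) e b b c δ l l r γ.

Definition is_lift (A : TwoCat) b e (l : hom A b e) (r : hom A b b) (γ : cell A b e) :=
  @is_ran (coop2 A) e b b l l r γ.
Definition respects_lift (A : TwoCat) b e c (δ : hom A c b) (l : hom A b e)
    (r : hom A b b) (γ : cell A b e) :=
  @preserves_ran (coop2 A) e b b c δ l l r γ.

Definition effective_op_faithful (A : TwoCat) b e (l : hom A b e) :=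
  @effective_faithful (op2 A) e b l.
Definition kleisli (A : TwoCat) b e (l : hom A b e) := @monadic (op2 A) e b l.
Definition co_kleisli (A : TwoCat) b e (l : hom A b e) := @monadic (coop2 A) e b l.

(* Main.v *)
Require Import Defs.
Set Implicit Arguments.
Unset Strict Implicit.

Section Basics.
Context {C : TwoCatData} (L : TwoCatLaws C).

Lemma src_wl a b c (h : hom C b c) (α : cell C a b) : src (wl h α) = comp h (src α).
Proof. unfold wl. rewrite (src_hcomp L), (src_id2 L). reflexivity. Qed.
Lemma tgt_wl a b c (h : hom C b c) (α : cell C a b) : tgt (wl h α) = comp h (tgt α).
Proof. unfold wl. rewrite (tgt_hcomp L), (tgt_id2 L). reflexivity. Qed.
Lemma src_wr a b c (α : cell C b c) (h : hom C a b) : src (wr α h) = comp (src α) h.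
Proof. unfold wr. rewrite (src_hcomp L), (src_id2 L). reflexivity. Qed.
Lemma tgt_wr a b c (α : cell C b c) (h : hom C a b) : tgt (wr α h) = comp (tgt α) h.
Proof. unfold wr. rewrite (tgt_hcomp L), (tgt_id2 L). reflexivity. Qed.

Lemma vid a b (f : hom C a b) : vcomp (id2 f) (id2 f) = id2 f.
Proof. pose proof (vcomp_id2l L (id2 f)) as H. rewrite (tgt_id2 L) in H. exact H. Qed.

Lemma vcomp_idl a b (α : cell C a b) g : tgt α = g -> vcomp (id2 g) α = α.
Proof. intros <-. apply (vcomp_id2l L). Qed.
Lemma vcomp_idr a b (α : cell C a b) g : src α = g -> vcomp α (id2 g) = α.
Proof. intros <-. apply (vcomp_id2r L). Qed.

Lemma wl_vcomp a b c (h : hom C b c) (β α : cell C a b) :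
  tgt α = src β -> wl h (vcomp β α) = vcomp (wl h β) (wl h α).
Proof.
  intros H. unfold wl. rewrite <- (interchange L); [| exact H | rewrite (tgt_id2 L), (src_id2 L); reflexivity].
  rewrite vid. reflexivity.
Qed.
Lemma wr_vcomp a b c (β α : cell C b c) (h : hom C a b) :
  tgt α = src β -> wr (vcomp β α) h = vcomp (wr β h) (wr α h).
Proof.
  intros H. unfold wr. rewrite <- (interchange L); [| rewrite (tgt_id2 L), (src_id2 L); reflexivity | exact H].
  rewrite vid. reflexivity.
Qed.
Lemma wl_wl a b c d (f : hom C c d) (g : hom C b c) (α : cell C a b) :
  wl f (wl g α) = wl (comp f g) α.
Proof. unfold wl. rewrite (hcompA L), (hcomp_id2 L). reflexivity. Qed.
Lemma wr_wr a b c d (α : cell C c d) (g : hom C b c) (f : hom C a b) :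
  wr (wr α g) f = wr α (comp g f).
Proof. unfold wr. rewrite <- (hcompA L), (hcomp_id2 L). reflexivity. Qed.
Lemma wl_wr a b c d (f : hom C c d) (α : cell C b c) (g : hom C a b) :
  wl f (wr α g) = wr (wl f α) g.
Proof. unfold wl, wr. rewrite (hcompA L). reflexivity. Qed.
Lemma wl_id1 a b (α : cell C a b) : wl (id1 b) α = α.
Proof. apply (hcomp_id2l L). Qed.
Lemma wr_id1 a b (α : cell C a b) : wr α (id1 a) = α.
Proof. apply (hcomp_id2r L). Qed.
Lemma wl_id2 a b c (f : hom C b c) (g : hom C a b) : wl f (id2 g) = id2 (comp f g).
Proof. apply (hcomp_id2 L). Qed.
Lemma wr_id2 a b c (g : hom C b c) (f : hom C a b) : wr (id2 g) f = id2 (comp g f).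
Proof. apply (hcomp_id2 L). Qed.

Lemma natur a b c (α : cell C a b) (β : cell C b c) :
  vcomp (wl (tgt β) α) (wr β (src α)) = vcomp (wr β (tgt α)) (wl (src β) α).
Proof.
  transitivity (hcomp β α).
  - unfold wl, wr. rewrite <- (interchange L).
    + rewrite (vcomp_id2l L), (vcomp_id2r L). reflexivity.
    + rewrite (tgt_id2 L). reflexivity.
    + rewrite (src_id2 L). reflexivity.
  - unfold wl, wr. rewrite <- (interchange L).
    + rewrite (vcomp_id2l L), (vcomp_id2r L). reflexivity.
    + rewrite (src_id2 L). reflexivity.
    + rewrite (tgt_id2 L). reflexivity.
Qed.

Lemma natur' a b c (α : cell C a b) (β : cell C b c) f f' g g' :
  src α = f -> tgt α = f' -> src β = g -> tgt β = g' ->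
  vcomp (wl g' α) (wr β f) = vcomp (wr β f') (wl g α).
Proof. intros <- <- <- <-. apply natur. Qed.

Lemma vA a b (γ β α : cell C a b) : tgt α = src β -> tgt β = src γ ->
  vcomp γ (vcomp β α) = vcomp (vcomp γ β) α.
Proof. apply (vcompA L). Qed.

Lemma assoc_ext b c d (f : hom C c d) (g : hom C b c) (h : hom C b d) :
  comp f g = h -> forall x (k : hom C x b), comp f (comp g k) = comp h k.
Proof. intros H x k. rewrite (compA L), H. reflexivity. Qed.

End Basics.

Lemma chain2 {C : TwoCatData} (L : TwoCatLaws C) a b (x y u v r : cell C a b) :
  vcomp x y = vcomp u v -> tgt r = src y -> tgt y = src x -> tgt r = src v -> tgt v = src u ->
  vcomp x (vcomp y r) = vcomp u (vcomp v r).
Proof. intros E H1 H2 H3 H4. rewrite (vA L) by assumption. rewrite E. rewrite (vA L) by assumption. reflexivity. Qed.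

Ltac st_step L :=
  first [ match goal with H : src ?x = _ |- context [src ?x] => rewrite H end
        | match goal with H : tgt ?x = _ |- context [tgt ?x] => rewrite H end
        | rewrite (src_wl L) | rewrite (tgt_wl L) | rewrite (src_wr L) | rewrite (tgt_wr L)
        | rewrite (src_id2 L) | rewrite (tgt_id2 L) | rewrite (src_hcomp L) | rewrite (tgt_hcomp L)
        | rewrite (src_vcomp L) by (cs L) | rewrite (tgt_vcomp L) by (cs L) ]
with n1 L := repeat (rewrite <- (compA L)); repeat (rewrite (comp1l L)); repeat (rewrite (comp1r L))
with use_eqs L :=
  repeat match goal with
  | H : comp ?f ?g = _ |- context [comp ?f ?g] => rewrite H
  | H : comp ?f ?g = _ |- context [comp ?f (comp ?g _)] => rewrite (assoc_ext L H)
  end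
with cs L := repeat (st_step L); repeat (progress (n1 L; use_eqs L)); reflexivity.

Ltac cn L :=
  repeat (progress (
    repeat (rewrite (wl_vcomp L) by (cs L));
    repeat (rewrite (wr_vcomp L) by (cs L));
    repeat (rewrite (wl_wl L)); repeat (rewrite (wr_wr L)); repeat (rewrite (wl_wr L));
    repeat (rewrite (wl_id2 L)); repeat (rewrite (wr_id2 L));
    repeat (rewrite (wl_id1 L)); repeat (rewrite (wr_id1 L));
    n1 L; use_eqs L;
    repeat (rewrite (vcomp_idl L) by (cs L));
    repeat (rewrite (vcomp_idr L) by (cs L));
    repeat (rewrite <- (vA L) by (cs L)))).

Section Ran.
Context {C : TwoCatData} (L : TwoCatLaws C).

Lemma ran_ex a b c (f : hom C a c) (g : hom C a b) r γ :
  is_ran f g r γ -> forall k θ, is_cell θ (comp k g) f ->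
  exists β, is_cell β k r /\ vcomp γ (wr β g) = θ.
Proof. intros [_ H] k θ Hθ. destruct (H k θ Hθ) as [β [Hb _]]. eauto. Qed.

Lemma ran_uniq a b c (f : hom C a c) (g : hom C a b) r γ :
  is_ran f g r γ -> forall k β1 β2, is_cell β1 k r -> is_cell β2 k r ->
  vcomp γ (wr β1 g) = vcomp γ (wr β2 g) -> β1 = β2.
Proof.
  intros [[Hs Ht] H] k β1 β2 [H1s H1t] [H2s H2t] E.
  assert (Hc : is_cell (vcomp γ (wr β1 g)) (comp k g) f).
  { split; cs L. }
  destruct (H k _ Hc) as [β [[Hb1 Hb2] U]].
  assert (β1 = β) by (symmetry; apply U; split; [split; assumption| reflexivity]).
  assert (β2 = β) by (symmetry; apply U; split; [split; assumption| symmetry; exact E]).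
  congruence.
Qed.

Lemma ran_cell a b c (f : hom C a c) (g : hom C a b) r γ :
  is_ran f g r γ -> src γ = comp r g /\ tgt γ = f.
Proof. intros [H _]; exact H. Qed.

Lemma pres_ran_iso a b c c' (δ : hom C c c') (f : hom C a c) (g : hom C a b) r γ r' γ' :
  is_ran f g r γ -> is_ran f g r' γ' -> preserves_ran δ f g r γ -> preserves_ran δ f g r' γ'.
Proof.
  intros R1 R2 P.
  pose proof (ran_cell R1) as [Gs Gt]. pose proof (ran_cell R2) as [G's G't].
  destruct (ran_ex R1 (k:=r') (θ:=γ')) as [σ [[Ss St] Sσ]]. { split; assumption. }
  destruct (ran_ex R2 (k:=r) (θ:=γ)) as [τ [[Ts Tt] Tτ]]. { split; assumption. }
  assert (TS : vcomp τ σ = id2 r').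
  { apply (ran_uniq R2 (k:=r')); try (split; cs L).
    rewrite (wr_vcomp L) by cs L. rewrite (vA L) by cs L. rewrite Tτ, Sσ.
    rewrite (wr_id2 L). rewrite (vcomp_idr L); [reflexivity| cs L]. }
  unfold preserves_ran in *. split. { split; cs L. }
  intros k θ Hθ.
  destruct (ran_ex P Hθ) as [β0 [[B0s B0t] B0]].
  exists (vcomp (wl δ τ) β0). split.
  - split. { split; cs L. }
    rewrite (wr_vcomp L) by cs L. rewrite (vA L) by cs L.
    rewrite <- (wl_wr L), <- (wl_vcomp L) by cs L. rewrite Tτ. exact B0.
  - intros β' [[B's B't] B'].
    assert (E : vcomp (wl δ σ) β' = β0).
    { apply (ran_uniq P (k:=k)); try (split; cs L).
      rewrite B0. rewrite (wr_vcomp L) by cs L. rewrite (vA L) by cs L.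
      rewrite <- (wl_wr L), <- (wl_vcomp L) by cs L. rewrite Sσ. exact B'. }
    rewrite <- E. rewrite (vA L) by cs L. rewrite <- (wl_vcomp L) by cs L.
    rewrite TS, (wl_id2 L). apply (vcomp_idl L). cs L.
Qed.

End Ran.

Section Ran2.
Context {C : TwoCatData} (L : TwoCatLaws C).

Lemma pres_iso a b c c' c'' (δ : hom C c c') (φ : hom C c' c'') (ψ : hom C c'' c')
  (f : hom C a c) (g : hom C a b) r γ :
  comp ψ φ = id1 c' -> comp φ ψ = id1 c'' ->
  preserves_ran δ f g r γ -> preserves_ran (comp φ δ) f g r γ.
Proof.
  intros E1 E2 P.
  pose proof (ran_cell P) as [Gs Gt].
  unfold preserves_ran in *. split. { rewrite <- (wl_wl L). split; cs L. }
  intros k θ [Hs Ht].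
  destruct (ran_ex P (k := comp ψ k) (θ := wl ψ θ)) as [β0 [[B0s B0t] B0]].
  { split; cs L. }
  exists (wl φ β0). split.
  - split. { split; cs L. }
    rewrite <- (wl_wl L), <- (wl_wr L), <- (wl_vcomp L) by cs L.
    rewrite B0, (wl_wl L), E2, (wl_id1 L). reflexivity.
  - intros β' [[B's B't] B']. rewrite <- (wl_wl L) in B'.
    assert (E : wl ψ β' = β0).
    { apply (ran_uniq L P (k:=comp ψ k)); try (split; cs L).
      rewrite B0, <- B'. rewrite (wl_vcomp L) by cs L.
      rewrite (wl_wl L ψ φ), E1, (wl_id1 L), (wl_wr L). reflexivity. }
    rewrite <- E, (wl_wl L), E2, (wl_id1 L). reflexivity.
Qed.

Lemma pres_opcomma e b (p : hom C e b) (O O' : opcomma p) c x (f : hom C c b) (g : hom C c x) r γ :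
  preserves_ran (oc_d0 O) f g r γ -> preserves_ran (oc_d0 O') f g r γ.
Proof.
  intros P.
  pose proof (oc_alpha_cell O) as [As At]. pose proof (oc_alpha_cell O') as [A's A't].
  destruct (oc_obj O (h0 := oc_d0 O') (h1 := oc_d1 O') (β := oc_alpha O')) as [φ [[F0 [F1 F2]] _]].
  { split; assumption. }
  destruct (oc_obj O' (h0 := oc_d0 O) (h1 := oc_d1 O) (β := oc_alpha O)) as [ψ [[G0 [G1 G2]] _]].
  { split; assumption. }
  assert (E1 : comp ψ φ = id1 _).
  { destruct (oc_obj O (h0 := oc_d0 O) (h1 := oc_d1 O) (β := oc_alpha O)) as [u [_ U]].
    { split; assumption. }
    transitivity u; [symmetry|]; apply U.
    - rewrite <- !(compA L), F0, F1, G0, G1. split; [reflexivity|split; [reflexivity|]].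
      rewrite <- (wl_wl L), F2, G2. reflexivity.
    - rewrite !(comp1l L), (wl_id1 L). auto. }
  assert (E2 : comp φ ψ = id1 _).
  { destruct (oc_obj O' (h0 := oc_d0 O') (h1 := oc_d1 O') (β := oc_alpha O')) as [u [_ U]].
    { split; assumption. }
    transitivity u; [symmetry|]; apply U.
    - rewrite <- !(compA L), G0, G1, F0, F1. split; [reflexivity|split; [reflexivity|]].
      rewrite <- (wl_wl L), G2, F2. reflexivity.
    - rewrite !(comp1l L), (wl_id1 L). auto. }
  rewrite <- F0. exact (pres_iso E1 E2 P).
Qed.

Lemma codensity_ex e b (p : hom C e b) t γ : is_ran p p t γ ->
  exists m η, is_codensity p t γ m η.
Proof.
  intros R. pose proof (ran_cell R) as [Gs Gt].
  destruct (ran_ex R (k := comp t t) (θ := vcomp γ (wl t γ))) as [m [Hm Em]].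
  { split; cs L. }
  destruct (ran_ex R (k := id1 b) (θ := id2 p)) as [η [Hη Eη]].
  { split; cs L. }
  exists m, η. unfold is_codensity. destruct Hm, Hη, R. repeat split; auto.
Qed.

End Ran2.

Definition EFK {B : TwoCatData} {e b : ob B} {p : hom B e b} (K : cokernel2 p) :=
  exists (D : laxdesc K) (pH : hom B e (ld_L D)),
    comp (ld_d D) pH = p /\ wr (ld_Psi D) pH = oc_alpha (ck_oc K) /\ equivalence pH.

Section Core.
Context {B : TwoCatData} (L : TwoCatLaws B) {e b : ob B} (p : hom B e b) (K : cokernel2 p)
  (t : hom B b b) (γ : cell B e b) (m η : cell B b b)
  (Hran : is_ran p p t γ)
  (Hγs : src γ = comp t p) (Hγt : tgt γ = p)
  (Hms : src m = comp t t) (Hmt : tgt m = t) (Hmγ : vcomp γ (wr m p) = vcomp γ (wl t γ))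
  (Hηs : src η = id1 b) (Hηt : tgt η = t) (Hηγ : vcomp γ (wr η p) = id2 p).

Local Notation O := (oc (ck_oc K)).
Local Notation d0 := (oc_d0 (ck_oc K)).
Local Notation d1 := (oc_d1 (ck_oc K)).
Local Notation al := (oc_alpha (ck_oc K)).
Local Notation P := (po (ck_po K)).
Local Notation D2 := (po_q0 (ck_po K)).
Local Notation D0 := (po_q1 (ck_po K)).
Local Notation D1 := (ck_D1 K).
Local Notation s0 := (ck_s0 K).

Context (Hals : src al = comp d1 p) (Halt : tgt al = comp d0 p)
  (Hsq : comp D2 d0 = comp D0 d1)
  (HD1d1 : comp D1 d1 = comp D2 d1) (HD1d0 : comp D1 d0 = comp D0 d0)
  (HD1al : wl D1 al = vcomp (wl D0 al) (wl D2 al))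
  (Hs0d0 : comp s0 d0 = id1 b) (Hs0d1 : comp s0 d1 = id1 b) (Hs0al : wl s0 al = id2 p).

Lemma k_ex : exists k : hom B O b, comp k d0 = id1 b /\ comp k d1 = t /\ wl k al = γ.
Proof.
  destruct (oc_obj (ck_oc K) (h0 := id1 b) (h1 := t) (β := γ)) as [k [[H0 [H1 H2]] _]].
  { split; cs L. }
  eauto.
Qed.

Section AK.
Context (ah : cell B b O) (Hahs : src ah = d1) (Haht : tgt ah = comp d0 t)
  (Hah : vcomp (wl d0 γ) (wr ah p) = al)
  (k : hom B O b) (Hk0 : comp k d0 = id1 b) (Hk1 : comp k d1 = t) (Hkal : wl k al = γ).

Lemma kah : wl k ah = id2 t.
Proof.
  apply (ran_uniq L Hran (k := t)); try (split; cs L).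
  transitivity (wl k al).
  - rewrite <- Hah. cn L. reflexivity.
  - rewrite Hkal. cn L. reflexivity.
Qed.

Lemma s0ah : wl s0 ah = η.
Proof.
  apply (ran_uniq L Hran (k := id1 b)); try (split; cs L).
  rewrite Hηγ. rewrite <- Hs0al, <- Hah. cn L. reflexivity.
Qed.

Lemma F1 y (h : hom B y b) (X : cell B y b) : src X = comp t h ->
  wl k (vcomp (wl d0 X) (wr ah h)) = X.
Proof. intros HX. pose proof kah as E. cn L. rewrite E. cn L. reflexivity. Qed.

Lemma F4 y z (h : hom B y b) (X : cell B y b) (g : hom B z y) : src X = comp t h ->
  wr (vcomp (wl d0 X) (wr ah h)) g = vcomp (wl d0 (wr X g)) (wr ah (comp h g)).
Proof. intros HX. cn L. reflexivity. Qed.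

Lemma F5 y (h : hom B y b) (X : cell B y b) : src X = comp t h ->
  wl s0 (vcomp (wl d0 X) (wr ah h)) = vcomp X (wr η h).
Proof. intros HX. pose proof s0ah as E. cn L. rewrite E. reflexivity. Qed.

Lemma F7 y (h : hom B y b) (X Y : cell B y b) : src X = comp t h -> src Y = comp t h ->
  vcomp (wl d0 X) (wr ah h) = vcomp (wl d0 Y) (wr ah h) -> X = Y.
Proof. intros HX HY E. rewrite <- (F1 HX), <- (F1 HY), E. reflexivity. Qed.

Lemma M1 y (h h' : hom B y b) (β' ξ : cell B y b) :
  src β' = comp t h' -> src ξ = h -> tgt ξ = h' ->
  vcomp (vcomp (wl d0 β') (wr ah h')) (wl d1 ξ) = vcomp (wl d0 (vcomp β' (wl t ξ))) (wr ah h).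
Proof.
  intros H1 H2 H3.
  pose proof (natur' L (α := ξ) (β := ah) H2 H3 Hahs Haht) as N.
  rewrite <- (vA L) by cs L. rewrite <- N. cn L. reflexivity.
Qed.

Lemma Mor y (h h' : hom B y b) (β β' ξ : cell B y b) :
  src β = comp t h -> tgt β = h -> src β' = comp t h' -> tgt β' = h' -> src ξ = h -> tgt ξ = h' ->
  (vcomp (vcomp (wl d0 β') (wr ah h')) (wl d1 ξ) = vcomp (wl d0 ξ) (vcomp (wl d0 β) (wr ah h)) <->
   vcomp β' (wl t ξ) = vcomp ξ β).
Proof.
  intros H1 H2 H3 H4 H5 H6. rewrite (M1 H3 H5 H6).
  rewrite (vA L) by cs L. rewrite <- (wl_vcomp L) by cs L.
  split.
  - intros E. apply (F7 (h := h)); try cs L. exact E.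
  - intros ->. reflexivity.
Qed.

Lemma eps_ex : exists ε : cell B O O, src ε = id1 O /\ tgt ε = comp d0 k /\ wr ε d0 = id2 d0 /\ wr ε d1 = ah.
Proof.
  destruct (oc_mor (o := ck_oc K) (h := id1 O) (h' := comp d0 k) (ξ0 := id2 d0) (ξ1 := ah))
    as [ε [[[E1 E2] [E3 E4]] _]].
  - split; cs L.
  - split; cs L.
  - rewrite <- (wl_wl L), Hkal, Hah. cn L. reflexivity.
  - exists ε. auto.
Qed.

Lemma r_ex : exists r : hom B P b, comp r D2 = comp t k /\ comp r D0 = k.
Proof.
  destruct (po_obj (ck_po K) (k0 := comp t k) (k1 := k)) as [r [[E1 E2] _]].
  - cs L.
  - eauto.
Qed.

Section E.
Context (ε : cell B O O) (Hεs : src ε = id1 O) (Hεt : tgt ε = comp d0 k)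
  (Hε0 : wr ε d0 = id2 d0) (Hε1 : wr ε d1 = ah)
  (r : hom B P b) (Hr2 : comp r D2 = comp t k) (Hr0 : comp r D0 = k).

Lemma F2 y (h : hom B y b) (β : cell B y O) : src β = comp d1 h -> tgt β = comp d0 h ->
  vcomp (wl d0 (wl k β)) (wr ah h) = β.
Proof.
  intros H1 H2.
  pose proof (natur' L (α := β) (β := ε) H1 H2 Hεs Hεt) as N.
  transitivity (vcomp (wl (comp d0 k) β) (wr ε (comp d1 h))).
  - rewrite <- (wr_wr L), Hε1, (wl_wl L). reflexivity.
  - rewrite N, <- (wr_wr L), Hε0, (wr_id2 L), (wl_id1 L). apply (vcomp_idl L). exact H2.
Qed.

Lemma Om_ex : exists Ω : cell B P P, src Ω = id1 P /\ tgt Ω = comp (comp D0 d0) r /\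
  wr Ω D2 = vcomp (wl D0 (wr ε (comp d1 k))) (wl D2 ε) /\ wr Ω D0 = wl D0 ε.
Proof.
  destruct (po_mor (p := ck_po K) (k := id1 P) (k' := comp (comp D0 d0) r)
    (ξ0 := vcomp (wl D0 (wr ε (comp d1 k))) (wl D2 ε)) (ξ1 := wl D0 ε))
    as [Ω [[[E1 E2] [E3 E4]] _]].
  - split; cs L.
  - split; cs L.
  - rewrite (wr_vcomp L) by cs L. rewrite <- !(wl_wr L). rewrite !(wr_wr L), Hε0.
    n1 L; use_eqs L; n1 L. rewrite Hε1. cn L. reflexivity.
  - exists Ω. auto.
Qed.

Section Om.
Context (Ω : cell B P P) (HΩs : src Ω = id1 P) (HΩt : tgt Ω = comp (comp D0 d0) r)
  (HΩ2 : wr Ω D2 = vcomp (wl D0 (wr ε (comp d1 k))) (wl D2 ε)) (HΩ0 : wr Ω D0 = wl D0 ε).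

Lemma repr (x : hom B b P) (σ : cell B b P) : src σ = x -> tgt σ = comp D0 (comp d0 t) ->
  σ = vcomp (wl (comp (comp D0 d0) r) σ) (wr Ω x).
Proof.
  intros H1 H2.
  pose proof (natur' L (α := σ) (β := Ω) H1 H2 HΩs HΩt) as N.
  rewrite N. rewrite <- (wr_wr L), HΩ0, <- (wl_wr L), <- (wr_wr L), Hε0.
  rewrite (wr_id2 L), (wl_id2 L), (wl_id1 L). symmetry. apply (vcomp_idl L). cs L.
Qed.

Lemma uniq_D0d0 (x : hom B b P) (σ1 σ2 : cell B b P) :
  src σ1 = x -> tgt σ1 = comp D0 (comp d0 t) -> src σ2 = x -> tgt σ2 = comp D0 (comp d0 t) ->
  vcomp (wl (comp D0 d0) γ) (wr σ1 p) = vcomp (wl (comp D0 d0) γ) (wr σ2 p) -> σ1 = σ2.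
Proof.
  intros H1 H2 H3 H4 E.
  assert (R : wl r σ1 = wl r σ2).
  { apply (ran_uniq L Hran (k := comp r x)); try (split; cs L).
    transitivity (wl r (vcomp (wl (comp D0 d0) γ) (wr σ1 p))).
    - cn L. reflexivity.
    - rewrite E. cn L. reflexivity. }
  rewrite (repr H1 H2), (repr H3 H4).
  rewrite <- !(wl_wl L (comp D0 d0) r), R. reflexivity.
Qed.

Lemma Iid : wl D1 ah = vcomp (wl (comp D0 d0) m) (vcomp (wr (wl D0 ah) t) (wl D2 ah)).
Proof.
  apply (uniq_D0d0 (x := comp D2 d1)); try cs L.
  transitivity (wl D1 al).
  - rewrite <- Hah. cn L. reflexivity.
  - rewrite HD1al.
    rewrite (wr_vcomp L) by cs L. rewrite (vA L) by cs L. rewrite <- (wl_wr L).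
    rewrite <- (wl_vcomp L) by cs L. rewrite Hmγ.
    rewrite <- Hah. cn L. f_equal.
    apply (chain2 L); try cs L.
    symmetry. apply (natur' L (α := γ) (β := wl D0 ah)); cs L.
Qed.

Lemma C1 y (h : hom B y b) (β : cell B y b) : src β = comp t h -> tgt β = h ->
  vcomp (wl D0 (vcomp (wl d0 β) (wr ah h))) (wl D2 (vcomp (wl d0 β) (wr ah h))) =
  vcomp (wl (comp D0 d0) (vcomp β (wl t β))) (wr (vcomp (wr (wl D0 ah) t) (wl D2 ah)) h).
Proof.
  intros H1 H2. cn L. f_equal.
  apply (chain2 L); try cs L.
  symmetry. apply (natur' L (α := β) (β := wl D0 ah)); cs L.
Qed.

Lemma C2 y (h : hom B y b) (β : cell B y b) : src β = comp t h -> tgt β = h ->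
  wl D1 (vcomp (wl d0 β) (wr ah h)) =
  vcomp (wl (comp D0 d0) (vcomp β (wr m h))) (wr (vcomp (wr (wl D0 ah) t) (wl D2 ah)) h).
Proof.
  intros H1 H2. rewrite (wl_vcomp L) by cs L. rewrite (wl_wr L), Iid. cn L. reflexivity.
Qed.

Lemma WrX : wl r (vcomp (wr (wl D0 ah) t) (wl D2 ah)) = id2 (comp t t).
Proof.
  pose proof kah as E.
  rewrite (wl_vcomp L) by cs L. rewrite (wl_wr L), (wl_wl L r D0), Hr0, E, (wl_wl L r D2), Hr2.
  rewrite <- (wl_wl L t k), E. cn L. reflexivity.
Qed.

Lemma cancel y (h : hom B y b) (A : cell B y b) : src A = comp t (comp t h) ->
  wl r (vcomp (wl (comp D0 d0) A) (wr (vcomp (wr (wl D0 ah) t) (wl D2 ah)) h)) = A.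
Proof.
  intros H. rewrite (wl_vcomp L) by cs L. rewrite (wl_wr L), WrX. cn L. reflexivity.
Qed.

Lemma F6 y (h : hom B y b) (β : cell B y b) : src β = comp t h -> tgt β = h ->
  (vcomp (wl D0 (vcomp (wl d0 β) (wr ah h))) (wl D2 (vcomp (wl d0 β) (wr ah h))) =
   wl D1 (vcomp (wl d0 β) (wr ah h)) <-> vcomp β (wl t β) = vcomp β (wr m h)).
Proof.
  intros H1 H2. rewrite (C1 H1 H2), (C2 H1 H2). split.
  - intros E. apply (f_equal (wl r)) in E. rewrite !cancel in E; try cs L. exact E.
  - intros ->. reflexivity.
Qed.

Lemma EM_to_desc (E : EMobj t m η) (pT : hom B e (em_ob E)) :
  comp (em_u E) pT = p -> wr (em_mu E) pT = γ -> equivalence pT -> EFK K.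
Proof.
  intros HpT1 HpT2 Heq.
  destruct (em_alg E) as [[Hμs Hμt] [Hassoc Hunit]].
  unfold EFK. unshelve eexists (@Build_laxdesc B e b p K (em_ob E) (em_u E)
     (vcomp (wl d0 (em_mu E)) (wr ah (em_u E))) _ _ _), pT.
  - unfold desc_datum, ck_D0, ck_D2, ck_d0, ck_d1. split; [split; cs L|split].
    + apply F6; auto.
    + rewrite F5 by auto. exact Hunit.
  - intros y h β Hd. unfold desc_datum, ck_D0, ck_D2, ck_d0, ck_d1 in Hd.
    destruct Hd as [[Hβs Hβt] [Hcoc Hun]].
    assert (Halg : is_alg t m η h (wl k β)).
    { split; [split; cs L|split].
      - apply (F6 (h := h)); try cs L. rewrite F2 by auto. exact Hcoc.
      - rewrite <- F5 by cs L. rewrite F2 by auto. exact Hun. }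
    destruct (em_obj E Halg) as [g [[Hg1 Hg2] U]].
    exists g. split.
    + split; [exact Hg1|]. rewrite F4 by auto. rewrite Hg2, Hg1. apply F2; auto.
    + intros g' [Hg'1 Hg'2]. apply U. split; [exact Hg'1|].
      rewrite <- Hg'2, F4 by auto. rewrite F1 by cs L. reflexivity.
  - intros y g g' ξ [Hξs Hξt] Hc. unfold ck_d0, ck_d1 in Hc.
    rewrite !F4 in Hc by auto.
    apply (Mor (h := comp (em_u E) g) (h' := comp (em_u E) g')) in Hc; try cs L.
    apply (em_mor (e := E)); [split; auto | exact Hc].
  - simpl. split; [exact HpT1|split; [|exact Heq]].
    rewrite F4 by auto. rewrite HpT1, HpT2. exact Hah.
Qed.

Lemma desc_to_EM (D : laxdesc K) (pH : hom B e (ld_L D)) :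
  comp (ld_d D) pH = p -> wr (ld_Psi D) pH = al -> equivalence pH -> monadic p.
Proof.
  intros HpH1 HpH2 Heq.
  pose proof (ld_datum D) as Hd. unfold desc_datum, ck_D0, ck_D2, ck_d0, ck_d1 in Hd.
  destruct Hd as [[HΨs HΨt] [Hcoc Hun]].
  exists t, γ, m, η. split.
  { split; [exact Hran| split; [split; auto| split; [auto| split; [split; auto| auto]]]]. }
  { unshelve eexists (@Build_EMobj B b t m η (ld_L D) (ld_d D) (wl k (ld_Psi D)) _ _ _), pH.
    + split; [split; cs L|split].
      * apply (F6 (h := ld_d D)); try cs L. rewrite F2 by auto. exact Hcoc.
      * rewrite <- F5 by cs L. rewrite F2 by auto. exact Hun.
    + intros y h β [[Hβs Hβt] [Has Hu]].
      assert (Hdat : desc_datum (K := K) h (vcomp (wl d0 β) (wr ah h))).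
      { unfold desc_datum, ck_D0, ck_D2, ck_d0, ck_d1. split; [split; cs L|split].
        - apply F6; auto.
        - rewrite F5 by auto. exact Hu. }
      destruct (ld_obj D Hdat) as [g [[Hg1 Hg2] U]].
      exists g. split.
      * split; [exact Hg1|]. rewrite <- (wl_wr L), Hg2. apply F1; auto.
      * intros g' [H1 H2]. apply U. split; [exact H1|].
        rewrite <- H2, <- (wl_wr L), <- H1. symmetry. apply F2; cs L.
    + intros y g g' ξ [Hξs Hξt] Hc.
      apply (ld_mor (l := D)); [split; auto|]. unfold ck_d0, ck_d1.
      rewrite <- (F2 (β := wr (ld_Psi D) g')) by cs L.
      rewrite <- (F2 (β := wr (ld_Psi D) g)) by cs L.
      rewrite !(wl_wr L k (ld_Psi D)).
      apply (Mor (h := comp (ld_d D) g) (h' := comp (ld_d D) g')); try cs L. exact Hc.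
    + simpl. split; [exact HpH1|split; [|exact Heq]].
      rewrite <- (wl_wr L), HpH2. exact Hkal. }
Qed.

End Om.
End E.
End AK.
Lemma core_build (Hpres : preserves_ran d0 p p t γ) :
  exists ah k ε r Ω,
  (src ah = d1 /\ tgt ah = comp d0 t /\ vcomp (wl d0 γ) (wr ah p) = al) /\
  (comp k d0 = id1 b /\ comp k d1 = t /\ wl k al = γ) /\
  (src ε = id1 O /\ tgt ε = comp d0 k /\ wr ε d0 = id2 d0 /\ wr ε d1 = ah) /\
  (comp r D2 = comp t k /\ comp r D0 = k) /\
  (src Ω = id1 P /\ tgt Ω = comp (comp D0 d0) r /\
   wr Ω D2 = vcomp (wl D0 (wr ε (comp d1 k))) (wl D2 ε) /\ wr Ω D0 = wl D0 ε).
Proof.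
  destruct (ran_ex Hpres (k := d1) (θ := al)) as [ah [[Hahs Haht] Hah]].
  { split; cs L. }
  destruct k_ex as [k [Hk0 [Hk1 Hkal]]].
  destruct (eps_ex Hahs Haht Hah Hk0 Hk1 Hkal) as [ε [Hεs [Hεt [Hε0 Hε1]]]].
  destruct (r_ex Hk0 Hk1) as [r [Hr2 Hr0]].
  destruct (Om_ex Hahs Hk0 Hk1 Hεs Hεt Hε0 Hε1 Hr2 Hr0) as [Ω HΩ].
  exists ah, k, ε, r, Ω. tauto.
Qed.

Lemma core_a (Hpres : preserves_ran d0 p p t γ) (E : EMobj t m η) (pT : hom B e (em_ob E)) :
  comp (em_u E) pT = p -> wr (em_mu E) pT = γ -> equivalence pT -> EFK K.
Proof.
  intros H1 H2 H3.
  destruct (core_build Hpres) as [ah [k [ε [r [Ω [[Hahs [Haht Hah]] [[Hk0 [Hk1 Hkal]]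
    [[Hεs [Hεt [Hε0 Hε1]]] [[Hr2 Hr0] [HΩs [HΩt [HΩ2 HΩ0]]]]]]]]]]]].
  exact (EM_to_desc Hahs Haht Hah Hk0 Hk1 Hkal Hεs Hεt Hε0 Hε1 Hr2 Hr0 HΩs HΩt HΩ0 H1 H2 H3).
Qed.

Lemma core_b (Hpres : preserves_ran d0 p p t γ) (D : laxdesc K) (pH : hom B e (ld_L D)) :
  comp (ld_d D) pH = p -> wr (ld_Psi D) pH = al -> equivalence pH -> monadic p.
Proof.
  intros H1 H2 H3.
  destruct (core_build Hpres) as [ah [k [ε [r [Ω [[Hahs [Haht Hah]] [[Hk0 [Hk1 Hkal]]
    [[Hεs [Hεt [Hε0 Hε1]]] [[Hr2 Hr0] [HΩs [HΩt [HΩ2 HΩ0]]]]]]]]]]]].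
  exact (desc_to_EM Hahs Haht Hah Hk0 Hk1 Hkal Hεs Hεt Hε0 Hε1 Hr2 Hr0 HΩs HΩt HΩ0 H1 H2 H3).
Qed.

End Core.

Lemma main_fwd (B : TwoCatData) (L : TwoCatLaws B) e b (p : hom B e b) (K : cokernel2 p) :
  (exists r γ, is_ran p p r γ /\ preserves_ran (oc_d0 (ck_oc K)) p p r γ) -> monadic p -> EFK K.
Proof.
  intros [r [γ [R P]]] [t [γ' [m [η [Hcod [E [pT [H1 [H2 H3]]]]]]]]].
  destruct Hcod as [Hran [[Hms Hmt] [Hmγ [[Hηs Hηt] Hηγ]]]].
  pose proof (pres_ran_iso L R Hran P) as P'.
  destruct (ran_cell Hran) as [Hγs Hγt].
  destruct (oc_alpha_cell (ck_oc K)) as [Hals Halt].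
  exact (core_a L Hran Hγs Hγt Hms Hmt Hmγ Hηs Hηt Hηγ Hals Halt (po_sq (ck_po K))
    (ck_D1_d1 K) (ck_D1_d0 K) (ck_D1_alpha K) (ck_s0_d0 K) (ck_s0_d1 K) (ck_s0_alpha K) P' H1 H2 H3).
Qed.

Lemma main_bwd (B : TwoCatData) (L : TwoCatLaws B) e b (p : hom B e b) (K : cokernel2 p) :
  (exists r γ, is_ran p p r γ /\ preserves_ran (oc_d0 (ck_oc K)) p p r γ) ->
  effective_faithful p -> monadic p.
Proof.
  intros [r [γ [R P]]] [K' [D [pH [H1 [H2 H3]]]]].
  pose proof (pres_opcomma L (ck_oc K') P) as P'.
  destruct (codensity_ex L R) as [m [η Hcod]].
  destruct Hcod as [Hran [[Hms Hmt] [Hmγ [[Hηs Hηt] Hηγ]]]].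
  destruct (ran_cell Hran) as [Hγs Hγt].
  destruct (oc_alpha_cell (ck_oc K')) as [Hals Halt].
  exact (core_b L Hran Hγs Hγt Hms Hmt Hmγ Hηs Hηt Hηγ Hals Halt (po_sq (ck_po K'))
    (ck_D1_d1 K') (ck_D1_d0 K') (ck_D1_alpha K') (ck_s0_d0 K') (ck_s0_d1 K') (ck_s0_alpha K') P' H1 H2 H3).
Qed.

Section Co.
Context (C : TwoCatData) {e b : ob C} (p : hom C e b).

Definition co_oc (O : opcomma p) : opcomma (B := co2 C) p.
Proof.
  refine (@Build_opcomma (co2 C) e b p (oc O) (oc_d1 O) (oc_d0 O) (oc_alpha O) _ _ _).
  - destruct (oc_alpha_cell O) as [H1 H2]. split; assumption.
  - intros y h0 h1 β [H1 H2].
    destruct (oc_obj O (h0 := h1) (h1 := h0) (β := β)) as [h [[E1 [E2 E3]] U]].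
    { split; assumption. }
    exists h. split; [simpl; auto|]. intros h' [F1 [F2 F3]]. apply U. auto.
  - intros y h h' ξ0 ξ1 [H1 H2] [H3 H4] E.
    destruct (oc_mor (o := O) (h := h') (h' := h) (ξ0 := ξ1) (ξ1 := ξ0)) as [ξ [[[F1 F2] [F3 F4]] U]].
    + split; assumption.
    + split; assumption.
    + symmetry. exact E.
    + exists ξ. split; [simpl; repeat split; assumption|].
      intros ξ' [[G1 G2] [G3 G4]]. apply U. repeat split; assumption.
Defined.

Definition co_po a c0 c1 (f0 : hom C a c0) (f1 : hom C a c1) (Q : pushout2 f0 f1) :
  pushout2 (B := co2 C) f1 f0.
Proof.
  refine (@Build_pushout2 (co2 C) a c1 c0 f1 f0 (po Q) (po_q1 Q) (po_q0 Q) _ _ _).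
  - symmetry. exact (po_sq Q).
  - intros y k0 k1 E.
    destruct (po_obj Q (k0 := k1) (k1 := k0)) as [k [[E1 E2] U]].
    { symmetry. exact E. }
    exists k. split; [simpl; auto|]. intros k' [F1 F2]. apply U. auto.
  - intros y k k' ξ0 ξ1 [H1 H2] [H3 H4] E.
    destruct (po_mor (p := Q) (k := k') (k' := k) (ξ0 := ξ1) (ξ1 := ξ0)) as [ξ [[[F1 F2] [F3 F4]] U]].
    + split; assumption.
    + split; assumption.
    + symmetry. exact E.
    + exists ξ. split; [simpl; repeat split; assumption|].
      intros ξ' [[G1 G2] [G3 G4]]. apply U. repeat split; assumption.
Defined.

Definition co_ker (K : cokernel2 p) : cokernel2 (B := co2 C) p.
Proof.
  refine (@Build_cokernel2 (co2 C) e b p (co_oc (ck_oc K)) (co_po (ck_po K)) (ck_D1 K)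
    _ _ _ (ck_s0 K) _ _ _).
  - exact (ck_D1_d0 K).
  - exact (ck_D1_d1 K).
  - exact (ck_D1_alpha K).
  - exact (ck_s0_d1 K).
  - exact (ck_s0_d0 K).
  - exact (ck_s0_alpha K).
Defined.

Lemma datum_co (K : cokernel2 p) y (h : hom C y b) β :
  desc_datum (K := co_ker K) h β <-> desc_datum (K := K) h β.
Proof.
  unfold desc_datum, is_cell, ck_D0, ck_D2, ck_d0, ck_d1. simpl. tauto.
Qed.

Definition ld_co (K : cokernel2 p) (D : laxdesc K) : laxdesc (co_ker K).
Proof.
  refine (@Build_laxdesc (co2 C) e b p (co_ker K) (ld_L D) (ld_d D) (ld_Psi D) _ _ _).
  - apply datum_co. exact (ld_datum D).
  - intros y h β Hd. apply datum_co in Hd.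
    destruct (ld_obj D Hd) as [g [G U]]. exists g. split; [exact G|]. exact U.
  - intros y g g' ξ [H1 H2] E.
    destruct (ld_mor (l := D) (g := g') (g' := g) (ξ := ξ)) as [ζ [[[F1 F2] F3] U]].
    + split; assumption.
    + symmetry. exact E.
    + exists ζ. split; [simpl; repeat split; assumption|].
      intros ζ' [[G1 G2] G3]. apply U. repeat split; assumption.
Defined.

Definition ld_unco (K : cokernel2 p) (D : laxdesc (co_ker K)) : laxdesc K.
Proof.
  refine (@Build_laxdesc C e b p K (ld_L D) (ld_d D) (ld_Psi D) _ _ _).
  - apply datum_co. exact (ld_datum D).
  - intros y h β Hd. apply datum_co in Hd.
    destruct (ld_obj D Hd) as [g [G U]]. exists g. split; [exact G|]. exact U.
  - intros y g g' ξ [H1 H2] E.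
    destruct (ld_mor (l := D) (g := g') (g' := g) (ξ := ξ)) as [ζ [[[F1 F2] F3] U]].
    + split; assumption.
    + symmetry. exact E.
    + exists ζ. split; [simpl; repeat split; assumption|].
      intros ζ' [[G1 G2] G3]. apply U. repeat split; assumption.
Defined.

End Co.

Ltac inv_tac := simpl in *;
  first [ split; congruence
        | match goal with |- _ = _ => first [ congruence
            | match goal with I : src ?x = _ |- context [src ?x] => rewrite I; assumption end
            | match goal with I : tgt ?x = _ |- context [tgt ?x] => rewrite I; assumption end ] end ].

Lemma equiv_co (C : TwoCatData) a b (f : hom C a b) : equivalence (B := co2 C) f -> equivalence f.
Proof.
  intros [g [η [ε [[H1 H2] [[η' [[I1 I2] [I3 I4]]] [[H3 H4] [ε' [[J1 J2] [J3 J4]]]]]]]]].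
  simpl in *.
  exists g, η', ε'. split; [split; congruence|split].
  - exists η. split; [split; congruence|]. split.
    + rewrite I2. exact I3.
    + rewrite I1. exact I4.
  - split; [split; congruence|].
    exists ε. split; [split; congruence|]. split.
    + rewrite J2. exact J3.
    + rewrite J1. exact J4.
Qed.

Lemma equiv_unco (C : TwoCatData) a b (f : hom C a b) : equivalence f -> equivalence (B := co2 C) f.
Proof.
  intros [g [η [ε [[H1 H2] [[η' [[I1 I2] [I3 I4]]] [[H3 H4] [ε' [[J1 J2] [J3 J4]]]]]]]]].
  exists g, η', ε'. unfold invertible, is_cell; simpl. split; [split; congruence|split].
  - exists η. unfold is_cell; simpl. split; [split; congruence|]. split.
    + rewrite I2. exact I3.
    + rewrite I1. exact I4.
  - split; [split; congruence|].
    exists ε. unfold is_cell; simpl. split; [split; congruence|]. split.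
    + rewrite J2. exact J3.
    + rewrite J1. exact J4.
Qed.

Unset Implicit Arguments.
Set Strict Implicit.

Theorem corollary5p10 (A : TwoCat) (b e : ob A) (l : hom A b e) (K : kernel2 l) :
  ((exists (r : hom A b b) (γ : cell A b e),
       is_rift l r γ /\ respects_rift (ker_delta0 K) l r γ) ->
     (kleisli l <-> effective_op_faithful l)) /\
  ((exists (r : hom A b b) (γ : cell A b e),
       is_lift l r γ /\ respects_lift (ker_delta1 K) l r γ) ->
     (co_kleisli l <-> effective_op_faithful l)).
Proof.
  pose proof (op2_laws (tc_laws A)) as LA.
  pose proof (co2_laws LA) as LC.
  split.
  - intros H. split.
    + intros Hm. pose proof (main_fwd LA (K := K) H Hm) as E. exists K. exact E.
    + intros Hf. exact (main_bwd LA (K := K) H Hf).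
  - intros H.
    assert (H' : exists r γ, is_ran (B := co2 (op2 A)) l l r γ /\
                 preserves_ran (oc_d0 (ck_oc (co_ker K))) l l r γ).
    { exact H. }
    split.
    + intros Hm. pose proof (main_fwd LC (K := co_ker K) H' Hm) as [D [pH [E1 [E2 E3]]]].
      exists K, (ld_unco D), pH. split; [exact E1|split; [exact E2|]].
      exact (equiv_co E3).
    + intros [K' [D [pH [E1 [E2 E3]]]]].
      apply (main_bwd LC (K := co_ker K) H').
      exists (co_ker K'), (ld_co D), pH. split; [exact E1|split; [exact E2|]].
      exact (equiv_unco E3).
Qed.
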